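(* Let $\mathbb{F}$ be a field of characteristic $2$, $V$ a finite-dimensional $\mathbb{F}$-vector space and $b$ a non-degenerate symmetric bilinear form on $V$. Let $\mathcal{V}$ be a linear subspace of $\mathcal{S}_b$ all of whose elements are nilpotent. Then there exist a perfect field $\mathbb{F}'$ of characteristic $2$, a vector space $V'$ over $\mathbb{F}'$ with $\dim_{\mathbb{F}'} V' = \dim_{\mathbb{F}} V$, a non-degenerate symmetric bilinear form $b'$ on $V'$, and a linear subspace $\mathcal{V}'$ of $\mathcal{S}_{b'}$ all of whose elements are nilpotent, such that $\dim_{\mathbb{F}'} \mathcal{V}' = \dim_{\mathbb{F}} \mathcal{V}$.
   Context: For a symmetric bilinear form $c$ on a space $W$, $\mathcal{S}_c$ is the space of endomorphisms $u$ of $W$ for which $(x,y)\mapsto c(x,u(y))$ is symmetric. A field of characteristic $2$ is perfect if $x\mapsto x^2$ is surjective on it. *)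

(* Defs.v *)
From HB Require Import structures.
From mathcomp Require Import all_boot all_order all_algebra.
Set Implicit Arguments. Unset Strict Implicit. Unset Printing Implicit Defensive.
Import GRing.Theory.
Local Open Scope ring_scope.

Definition is_bilin_form (F : fieldType) (V : vectType F) (b : V -> V -> F) : Prop :=
  (forall (a : F) (x y z : V), b (a *: x + y) z = a * b x z + b y z) /\
  (forall (a : F) (x y z : V), b x (a *: y + z) = a * b x y + b x z).

Definition sym_bform (F : fieldType) (V : vectType F) (b : V -> V -> F) : Prop :=
  forall x y : V, b x y = b y x.

Definition nondeg_bform (F : fieldType) (V : vectType F) (b : V -> V -> F) : Prop :=
  forall x : V, (forall y : V, b x y = 0) -> x = 0.

Definition in_S (F : fieldType) (V : vectType F) (c : V -> V -> F) (u : 'End(V)) : Prop :=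
  forall x y : V, c x (u y) = c y (u x).

Definition nilpotent_end (F : fieldType) (V : vectType F) (u : 'End(V)) : Prop :=
  exists k : nat, forall x : V, iter k u x = 0.

Definition perfect_char2 (F : fieldType) : Prop :=
  (2%N \in [pchar F]) /\ forall x : F, exists y : F, y ^+ 2 = x.

(* Main.v *)
Require Import Defs.
From HB Require Import structures.
From mathcomp Require Import all_boot all_order all_algebra zify generic_quotient.
From Stdlib Require Import Classical.
Set Implicit Arguments. Unset Strict Implicit. Unset Printing Implicit Defensive.
Import GRing.Theory.
Import VectorInternalTheory.
Local Open Scope ring_scope.

Module PCl.
Local Open Scope quotient_scope.



Section Fr.
Variables (F : fieldType) (ch : 2%N \in [pchar F]).
Definition fr n (x : F) := x ^+ (2 ^ n).

Lemma frD n x y : fr n (x + y) = fr n x + fr n y.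
Proof.
elim: n => [|n IH]; first by rewrite /fr !expr1.
rewrite /fr expnS mulnC !exprM -!/(fr n _) IH sqrrD.
by rewrite (mulrn_pchar ch) addr0.
Qed.
Lemma frM n x y : fr n (x * y) = fr n x * fr n y.
Proof. by rewrite /fr exprMn. Qed.
Lemma fr0 n : fr n 0 = 0.
Proof. by rewrite /fr expr0n expn_eq0. Qed.
Lemma fr1 n : fr n 1 = 1.
Proof. by rewrite /fr expr1n. Qed.
Lemma frN n x : fr n (- x) = - fr n x.
Proof. by rewrite !(oppr_pchar2 ch). Qed.
Lemma frV n x : fr n (x^-1) = (fr n x)^-1.
Proof. by rewrite /fr exprVn. Qed.
Lemma frfr m n x : fr m (fr n x) = fr (n + m) x.
Proof. by rewrite /fr -exprM expnD. Qed.
Lemma fr_eq0 n x : (fr n x == 0) = (x == 0).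
Proof. by rewrite /fr expf_eq0 expn_gt0. Qed.
Lemma fr_inj n : injective (fr n).
Proof.
move=> x y /eqP; rewrite -subr_eq0 -frN -frD fr_eq0 subr_eq0 => /eqP //.
Qed.


Definition lift N (p : F * nat) := fr (N - p.2) p.1.
Definition eqpc (p q : F * nat) := fr q.2 p.1 == fr p.2 q.1.

Lemma eqpc_lift N p q : (p.2 + q.2 <= N)%N -> eqpc p q = (lift N p == lift N q).
Proof.
move=> hN; rewrite /eqpc /lift.
have -> : (N - p.2 = q.2 + (N - p.2 - q.2))%N by lia.
have -> : (N - q.2 = p.2 + (N - p.2 - q.2))%N by lia.
by rewrite -!frfr (inj_eq (@fr_inj _)).
Qed.


Lemma eqpc_refl : reflexive eqpc.
Proof. by move=> p; rewrite /eqpc. Qed.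
Lemma eqpc_sym : symmetric eqpc.
Proof. by move=> p q; rewrite /eqpc eq_sym. Qed.
Lemma eqpc_trans : transitive eqpc.
Proof.
move=> q p r; set N := (p.2 + q.2 + r.2)%N.
rewrite !(eqpc_lift (N:=N)) ?/N; try lia.
by move=> /eqP -> /eqP ->.
Qed.

Canonical eqpc_equiv := EquivRel eqpc eqpc_refl eqpc_sym eqpc_trans.
Definition pc := {eq_quot eqpc}.
HB.instance Definition _ : EqQuotient _ eqpc pc := EqQuotient.on pc.
HB.instance Definition _ := Choice.on pc.

Definition addpc (p q : F * nat) := (fr q.2 p.1 + fr p.2 q.1, (p.2 + q.2)%N).
Definition mulpc (p q : F * nat) := (fr q.2 p.1 * fr p.2 q.1, (p.2 + q.2)%N).
Definition opppc (p : F * nat) := (- p.1, p.2).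
Definition invpc (p : F * nat) := (p.1^-1, p.2).

Lemma lift_le N p k x : (p.2 + k <= N)%N -> lift N p = x -> fr k p.1 = x -> True.
Proof. by []. Qed.

Lemma liftE N M p : (p.2 + M <= N)%N -> lift N p = fr (N - p.2 - M) (fr M p.1).
Proof. move=> h; rewrite /lift frfr; congr fr; lia. Qed.

Lemma lift_add N p q : (p.2 + q.2 <= N)%N -> lift N (addpc p q) = lift N p + lift N q.
Proof.
move=> h; rewrite /lift /= frD !frfr; congr (fr _ _ + fr _ _); lia.
Qed.
Lemma lift_mul N p q : (p.2 + q.2 <= N)%N -> lift N (mulpc p q) = lift N p * lift N q.
Proof.
move=> h; rewrite /lift /= frM !frfr; congr (fr _ _ * fr _ _); lia.
Qed.
Lemma lift_opp N p : lift N (opppc p) = - lift N p.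
Proof. by rewrite /lift frN. Qed.
Lemma lift_inv N p : lift N (invpc p) = (lift N p)^-1.
Proof. by rewrite /lift frV. Qed.
Lemma lift_cst N x : lift N (x, 0%N) = fr N x.
Proof. by rewrite /lift subn0. Qed.

Lemma eqpcP N p q : (p.2 + q.2 <= N)%N -> lift N p = lift N q -> \pi_pc p = \pi_pc q.
Proof. by move=> h e; apply/eqmodP; rewrite /= (eqpc_lift h) e. Qed.
Lemma eqpcE N p q : (p.2 + q.2 <= N)%N -> (\pi_pc p == \pi_pc q) = (lift N p == lift N q).
Proof. by move=> h; rewrite eqmodE /= (eqpc_lift h). Qed.

Definition add := lift_op2 pc addpc.
Lemma pi_add : {morph \pi : x y / addpc x y >-> add x y}.
Proof.
move=> x y; unlock add; set x' := repr _; set y' := repr _.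
have ex : eqpc x' x by rewrite /x' -eqmodE reprK.
have ey : eqpc y' y by rewrite /y' -eqmodE reprK.
set N := (x.2 + y.2 + x'.2 + y'.2)%N.
apply: (eqpcP (N:=N)); first by rewrite /=; lia.
rewrite !lift_add; try lia.
move: ex ey; rewrite !(eqpc_lift (N:=N)); try lia.
by move=> /eqP -> /eqP ->.
Qed.
Canonical pi_add_morph := PiMorph2 pi_add.

Definition mul := lift_op2 pc mulpc.
Lemma pi_mul : {morph \pi : x y / mulpc x y >-> mul x y}.
Proof.
move=> x y; unlock mul; set x' := repr _; set y' := repr _.
have ex : eqpc x' x by rewrite /x' -eqmodE reprK.
have ey : eqpc y' y by rewrite /y' -eqmodE reprK.
set N := (x.2 + y.2 + x'.2 + y'.2)%N.
apply: (eqpcP (N:=N)); first by rewrite /=; lia.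
rewrite !lift_mul; try lia.
move: ex ey; rewrite !(eqpc_lift (N:=N)); try lia.
by move=> /eqP -> /eqP ->.
Qed.
Canonical pi_mul_morph := PiMorph2 pi_mul.

Definition opp := lift_op1 pc opppc.
Lemma pi_opp : {morph \pi : x / opppc x >-> opp x}.
Proof.
move=> x; unlock opp; set x' := repr _.
have ex : eqpc x' x by rewrite /x' -eqmodE reprK.
set N := (x.2 + x'.2)%N.
apply: (eqpcP (N:=N)); first by rewrite /=; lia.
rewrite !lift_opp.
move: ex; rewrite !(eqpc_lift (N:=N)); try lia.
by move=> /eqP ->.
Qed.
Canonical pi_opp_morph := PiMorph1 pi_opp.

Definition inv := lift_op1 pc invpc.
Lemma pi_inv : {morph \pi : x / invpc x >-> inv x}.
Proof.
move=> x; unlock inv; set x' := repr _.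
have ex : eqpc x' x by rewrite /x' -eqmodE reprK.
set N := (x.2 + x'.2)%N.
apply: (eqpcP (N:=N)); first by rewrite /=; lia.
rewrite !lift_inv.
move: ex; rewrite !(eqpc_lift (N:=N)); try lia.
by move=> /eqP ->.
Qed.
Canonical pi_inv_morph := PiMorph1 pi_inv.

Definition zero : pc := \pi_pc (0, 0%N).
Definition one : pc := \pi_pc (1, 0%N).

Ltac solve_pc N := apply: (eqpcP (N:=N)); [rewrite /=; lia| rewrite ?(lift_add, lift_mul, lift_opp, lift_inv, lift_cst) /=; try lia].

Lemma addA : associative add.
Proof.
elim/quotW=> x; elim/quotW=> y; elim/quotW=> z; rewrite !piE.
solve_pc constr:((4 * (x.2 + y.2 + z.2))%N).
by rewrite addrA.
Qed.
Lemma addC : commutative add.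
Proof.
elim/quotW=> x; elim/quotW=> y; rewrite !piE.
solve_pc constr:((4 * (x.2 + y.2))%N). by rewrite addrC.
Qed.
Lemma add0 : left_id zero add.
Proof.
elim/quotW=> x; rewrite !piE.
solve_pc constr:((4 * (x.2))%N). by rewrite fr0 add0r.
Qed.
Lemma addN : left_inverse zero opp add.
Proof.
elim/quotW=> x; rewrite !piE.
solve_pc constr:((4 * (x.2))%N). by rewrite fr0 addNr.
Qed.
HB.instance Definition _ := GRing.isZmodule.Build pc addA addC add0 addN.

Lemma mulA : associative mul.
Proof.
elim/quotW=> x; elim/quotW=> y; elim/quotW=> z; rewrite !piE.
solve_pc constr:((4 * (x.2 + y.2 + z.2))%N). by rewrite mulrA.
Qed.
Lemma mulC : commutative mul.
Proof.
elim/quotW=> x; elim/quotW=> y; rewrite !piE.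
solve_pc constr:((4 * (x.2 + y.2))%N). by rewrite mulrC.
Qed.
Lemma mul1 : left_id one mul.
Proof.
elim/quotW=> x; rewrite !piE.
solve_pc constr:((4 * (x.2))%N). by rewrite fr1 mul1r.
Qed.
Lemma mulDl : left_distributive mul add.
Proof.
elim/quotW=> x; elim/quotW=> y; elim/quotW=> z; rewrite !piE.
solve_pc constr:((4 * (x.2 + y.2 + z.2))%N). by rewrite mulrDl.
Qed.
Lemma one_neq0 : one != zero.
Proof.
apply/negP => /eqP /eqmodP; rewrite /= /eqpc /= fr0 fr1; apply/negP; exact: oner_neq0.
Qed.
HB.instance Definition _ := GRing.Zmodule_isComNzRing.Build pc mulA mulC mul1 mulDl one_neq0.

Lemma mulV : forall a : pc, a != 0 -> mul (inv a) a = 1.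
Proof.
elim/quotW=> x hx; rewrite !piE.
have hx' : x.1 != 0.
  apply: contra hx => /eqP h; apply/eqP; apply: (eqpcP (N:=x.2)) => /=; first lia.
  by rewrite lift_cst /lift h !fr0.
solve_pc constr:((4 * (x.2))%N).
by rewrite mulVf ?fr1 // /lift fr_eq0.
Qed.
Lemma inv0 : inv 0 = 0.
Proof. rewrite !piE. solve_pc constr:(0%N). by rewrite invr0. Qed.
HB.instance Definition _ := GRing.ComNzRing_isField.Build pc mulV inv0.

Definition iota (x : F) : pc := \pi_pc (x, 0%N).
Lemma iota_zmod : zmod_morphism iota.
Proof.
move=> x y; rewrite /iota -[X in _ = _ + X]pi_opp -[RHS]pi_add.
solve_pc constr:(0%N). by rewrite frD.
Qed.
HB.instance Definition _ := GRing.isZmodMorphism.Build F pc iota iota_zmod.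
Lemma iota_monoid : monoid_morphism iota.
Proof.
split=> [//|x y]; rewrite /iota -[RHS]pi_mul.
solve_pc constr:(0%N). by rewrite frM.
Qed.
HB.instance Definition _ := GRing.isMonoidMorphism.Build F pc iota iota_monoid.

Lemma pc_char : 2%N \in [pchar pc].
Proof.
rewrite inE /= mulr2n; apply/eqP.
rewrite -(rmorph1 iota) -rmorphD (addrr_pchar2 ch); exact: rmorph0.
Qed.

Lemma pc_perfect (a : pc) : exists b : pc, b ^+ 2 = a.
Proof.
elim/quotW: a => x; exists (\pi_pc (x.1, x.2.+1)).
rewrite expr2 !piE.
solve_pc constr:((4 * x.2.+1)%N).
rewrite /lift /= -frM -[_ * _]expr2 -[_ ^+ 2]/(fr 1 _) frfr; congr fr; lia.
Qed.

End Fr.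

End PCl.
Import PCl.


Lemma map_mxX (R S : pzRingType) (f : {rmorphism R -> S}) n (A : 'M[R]_n) k :
  map_mx f (A ^+ k) = (map_mx f A) ^+ k.
Proof. exact: rmorphXn. Qed.

Section Ext.
Variables (R K : fieldType) (f : {rmorphism R -> K}).
Hypothesis inf : forall s : seq R, exists x, x \notin s.

Lemma uniq_seq m : exists s : seq R, uniq s /\ size s = m.
Proof.
elim: m => [|m [s [us ss]]]; first by exists [::].
have [x hx] := inf s; exists (x :: s); by rewrite /= hx us ss.
Qed.

Lemma poly_inf (p : {poly K}) : (forall r, p.[f r] = 0) -> p = 0.
Proof.
move=> h; have [s [us ss]] := uniq_seq (size p).
apply: (roots_geq_poly_eq0 (rs := map f s)).
- by apply/allP => _ /mapP [r _ ->]; apply/eqP/h.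
- by rewrite (map_inj_uniq (@fmorph_inj _ _ f)).
- by rewrite size_map ss.
Qed.
Lemma ext_nil n d (U : 'I_d -> 'M[R]_n) N :
  (forall c : 'I_d -> R, (\sum_i c i *: U i) ^+ N = 0) ->
  forall c : 'I_d -> K, (\sum_i c i *: map_mx f (U i)) ^+ N = 0.
Proof.
move=> H.
suff P : forall j (c : 'I_d -> K), (forall i : 'I_d, (j <= i)%N -> exists r, c i = f r) ->
    (\sum_i c i *: map_mx f (U i)) ^+ N = 0.
  by move=> c; apply: (P d) => i; rewrite leqNgt ltn_ord.
elim=> [|j IH] c hc.
  have [r hr] := fin_all_exists (fun i => hc i (leq0n _)).
  have -> : \sum_i c i *: map_mx f (U i) = map_mx f (\sum_i r i *: U i).
    by rewrite map_mx_sum; apply: eq_bigr => i _; rewrite map_mxZ hr.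
  by rewrite -map_mxX H map_mx0.
case: (ltnP j d) => hj; last first.
  by apply: IH => i hi; exfalso; have := ltn_ord i; lia.
set j' := Ordinal hj.
pose ct t := fun i : 'I_d => if i == j' then t else c i.
pose Q : 'M[{poly K}]_n :=
  \sum_i (if i == j' then 'X else (c i)%:P) *: map_mx (fun x => (f x)%:P) (U i).
have evQ t : map_mx (horner_eval t) (Q ^+ N) = (\sum_i ct t i *: map_mx f (U i)) ^+ N.
  rewrite map_mxX map_mx_sum; congr (_ ^+ _); apply: eq_bigr => i _.
  rewrite map_mxZ /ct; congr (_ *: _).
    by case: (i == j'); rewrite /= horner_evalE ?hornerX ?hornerC.
  by apply/matrixP => a b; rewrite !mxE /= horner_evalE hornerC.
have Q0 : Q ^+ N = 0.
  apply/matrixP => a b; rewrite mxE; apply: (poly_inf) => r.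
  have := evQ (f r); rewrite IH.
    by move/matrixP/(_ a b); rewrite !mxE /= horner_evalE.
  move=> i hi; rewrite /ct; case: eqP => [_|hne]; first by exists r.
  apply: hc; move: hne hi; rewrite /j' => hne hi.
  have : nat_of_ord i != j by apply/eqP => e; apply: hne; apply: val_inj.
  lia.
have -> : \sum_i c i *: map_mx f (U i) = \sum_i ct (c j') i *: map_mx f (U i).
  by apply: eq_bigr => i _; rewrite /ct; case: eqP => [->|].
by rewrite -evQ Q0 map_mx0.
Qed.
End Ext.


Lemma rowfree_of (K : fieldType) m n (A : 'M[K]_(m, n)) :
  (forall X : 'rV_m, X *m A = 0 -> X = 0) -> row_free A.
Proof.
move=> h; rewrite -kermx_eq0; apply/eqP/row_matrixP => i.
by rewrite row0; apply: h; rewrite -row_mul mulmx_ker row0.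
Qed.

Lemma mx_nil (K : fieldType) n (A : 'M[K]_n) k : A ^+ k = 0 -> A ^+ n = 0.
Proof.
case: n A => [|m] A hk; first by apply/matrixP => i; case: i.
have h1 : horner_mx A ('X^k) = 0 by rewrite rmorphXn /= horner_mx_X.
have := mxminpoly_min h1.
rewrite -[X in _ %| X ^+ _]subr0 -polyC0 => /dvdp_exp_XsubCP [j jk hj].
have hs := size_mxminpoly A.
have hd : (degree_mxminpoly A <= m.+1)%N.
  have := dvdp_leq _ (mxminpoly_dvd_char A).
  rewrite size_char_poly hs; apply.
  by rewrite -size_poly_eq0 size_char_poly.
move: (hj); rewrite polyC0 subr0 => hj'.
have := eqp_size hj'; rewrite size_polyXn hs => -[hdj].
have : mxminpoly A %| 'X ^+ m.+1.
  by rewrite (eqp_dvdl _ hj') dvdp_exp2l //; lia.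
by move/mxminpoly_minP; rewrite rmorphXn /= horner_mx_X.
Qed.

Section VSide.
Variables (F : fieldType) (V : vectType F) (b : V -> V -> F).
Hypothesis hbil : is_bilin_form b.

Lemma b_sumr I (r : seq I) x (c : I -> F) (y : I -> V) :
  b x (\sum_(i <- r) c i *: y i) = \sum_(i <- r) c i * b x (y i).
Proof.
have b0 : b x 0 = 0.
  have := hbil.2 1 x 0 0; rewrite scaler0 addr0 mul1r => h.
  by by apply: (@addrI _ (b x 0)); rewrite addr0 -h.
elim/big_rec2: _ => // i s1 s2 _ <-; exact: hbil.2.
Qed.

Lemma b_suml I (r : seq I) y (c : I -> F) (x : I -> V) :
  b (\sum_(i <- r) c i *: x i) y = \sum_(i <- r) c i * b (x i) y.
Proof.
have b0 : b 0 y = 0.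
  have := hbil.1 1 0 0 y; rewrite scaler0 addr0 mul1r => h.
  by by apply: (@addrI _ (b 0 y)); rewrite addr0 -h.
elim/big_rec2: _ => // i s1 s2 _ <-; exact: hbil.1.
Qed.

Definition ev (i : 'I_(dim V)) : V := r2v (delta_mx 0 i).

Lemma vdecomp (v : V) : v = \sum_i v2r v 0 i *: ev i.
Proof.
rewrite -{1}(v2rK v) {1}(row_sum_delta (v2r v)) linear_sum.
by apply: eq_bigr => i _; rewrite linearZ.
Qed.

Lemma lfun_mx (u : 'End(V)) x : u x = r2v (v2r x *m f2mx u).
Proof. by rewrite unlock. Qed.

Lemma f2mx_rows (u : 'End(V)) : f2mx u = \matrix_i v2r (u (ev i)).
Proof.
apply/row_matrixP => i; rewrite rowK lfun_mx r2vK /ev r2vK.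
by rewrite rowE.
Qed.

Lemma f2mx_lin (a : F) (u w : 'End(V)) : f2mx (a *: u + w) = a *: f2mx u + f2mx w.
Proof.
rewrite !(f2mx_rows (_ + _)) (f2mx_rows u) (f2mx_rows w).
apply/row_matrixP => i; rewrite linearD linearZ /= !rowK.
by rewrite add_lfunE scale_lfunE linearD linearZ.
Qed.

Definition Bmat : 'M[F]_(dim V) := \matrix_(i, j) b (ev i) (ev j).

Lemma B_sym : sym_bform b -> Bmat^T = Bmat.
Proof. by move=> hs; apply/matrixP => i j; rewrite !mxE hs. Qed.

Lemma B_free : nondeg_bform b -> row_free Bmat.
Proof.
move=> hnd; apply: rowfree_of => X hX.
have hx : r2v X = 0.
  apply: hnd => y; rewrite (vdecomp y) b_sumr big1 // => j _.
  rewrite (vdecomp (r2v X)) r2vK b_suml.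
  suff -> : \sum_i X 0 i * b (ev i) (ev j) = (X *m Bmat) 0 j by rewrite hX mxE mulr0.
  by rewrite mxE; apply: eq_bigr => i _; rewrite mxE.
by rewrite -(r2vK X) hx linear0.
Qed.

Lemma v2r_ev_u (u : 'End(V)) j : v2r (u (ev j)) = row j (f2mx u).
Proof. by rewrite lfun_mx r2vK /ev r2vK rowE. Qed.

Lemma B_inS (u : 'End(V)) : sym_bform b -> in_S b u -> Bmat *m (f2mx u)^T = f2mx u *m Bmat.
Proof.
move=> hs hu; apply/matrixP => i j; rewrite !mxE.
have e1 := hu (ev i) (ev j).
rewrite (vdecomp (u (ev j))) (vdecomp (u (ev i))) !b_sumr in e1.
rewrite !v2r_ev_u in e1.
transitivity (\sum_k row j (f2mx u) 0 k * b (ev i) (ev k)).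
  by apply: eq_bigr => k _; rewrite !mxE mulrC.
rewrite e1; apply: eq_bigr => k _; by rewrite !mxE hs.
Qed.

Lemma iter_mx (u : 'End(V)) k x : iter k u x = r2v (v2r x *m f2mx u ^+ k).
Proof.
elim: k => [|k IH] /=; first by rewrite expr0 mulmx1 v2rK.
by rewrite IH lfun_mx r2vK exprSr mulmxA.
Qed.

Lemma nil_mx (u : 'End(V)) : nilpotent_end u -> f2mx u ^+ dim V = 0.
Proof.
move=> [k hk]; apply: (@mx_nil _ _ _ k); apply/row_matrixP => i.
by have := hk (ev i); rewrite iter_mx /ev r2vK => /(congr1 v2r); rewrite r2vK linear0 row0 rowE => ->.
Qed.

Lemma f2mx0 : f2mx (0 : 'End(V)) = 0.
Proof.
rewrite f2mx_rows; apply/row_matrixP => i; rewrite rowK row0.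
by rewrite zero_lfunE linear0.
Qed.

Lemma f2mx_sum I (r : seq I) (c : I -> F) (w : I -> 'End(V)) :
  f2mx (\sum_(i <- r) c i *: w i) = \sum_(i <- r) c i *: f2mx (w i).
Proof.
elim/big_rec2: _ => [|i s1 s2 _ <-]; first exact: f2mx0.
exact: f2mx_lin.
Qed.

Variable W : {vspace 'End(V)}.
Definition Ub (i : 'I_(\dim W)) := f2mx (vbasis W)`_i.

Lemma sum_in_W (c : 'I_(\dim W) -> F) : \sum_i c i *: (vbasis W)`_i \in W.
Proof.
apply: memv_suml => i _; apply: memvZ; apply: vbasis_mem; apply: mem_nth.
by rewrite size_tuple.
Qed.

Lemma A_free : row_free (\matrix_(i < \dim W) mxvec (Ub i)).
Proof.
apply: rowfree_of => X hX.
have h1 : f2mx (\sum_i X 0 i *: (vbasis W)`_i) = 0.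
  apply: (can_inj (@mxvecK _ _ _)); rewrite linear0 -hX mulmx_sum_row f2mx_sum linear_sum.
  by apply: eq_bigr => i _; rewrite linearZ rowK.
have h2 : \sum_i X 0 i *: (vbasis W)`_i = 0.
  by apply: val_inj; rewrite /= h1 -f2mx0.
have hf := basis_free (vbasisP W).
apply/rowP => i; rewrite mxE.
exact: (freeP hf) h2 i.
Qed.

End VSide.


Section Target.
Variables (K F' : fieldType) (f : {rmorphism K -> F'}) (n d : nat).
Variables (B : 'M[K]_n) (U : 'I_d -> 'M[K]_n).
Hypotheses (hBs : B^T = B) (hBf : row_free B)
  (hBU : forall i, B *m (U i)^T = U i *m B)
  (hA : row_free (\matrix_(i < d) mxvec (U i)))
  (hN : forall c : 'I_d -> F', (\sum_i c i *: map_mx f (U i)) ^+ n = 0).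

Let B' := map_mx f B.
Let U' i := map_mx f (U i).
Definition bt (x y : 'rV[F']_n) : F' := (x *m B' *m y^T) 0 0.
Definition Lt i : 'End('rV[F']_n) := linfun (mulmxr (U' i)).
Definition Xt := [tuple Lt i | i < d].
Definition Wt := <<Xt>>%VS.

Lemma bt_bil : is_bilin_form bt.
Proof.
split=> a x y z; rewrite /bt.
  by rewrite mulmxDl mulmxDl -!scalemxAl !mxE.
by rewrite linearD linearZ /= mulmxDr -scalemxAr !mxE.
Qed.

Lemma B'sym : B'^T = B'.
Proof. by rewrite /B' map_trmx hBs. Qed.

Lemma bt_sym : sym_bform bt.
Proof.
move=> x y; rewrite /bt.
transitivity ((y *m B' *m x^T)^T 0 0); last by rewrite mxE.
by rewrite !trmx_mul trmxK B'sym mulmxA.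
Qed.

Lemma bt_nd : nondeg_bform bt.
Proof.
move=> x hx.
have hu : B' \in unitmx by rewrite map_unitmx -row_free_unit.
have h0 : x *m B' = 0.
  apply/rowP => j; rewrite [RHS]mxE -(hx (delta_mx 0 j)) /bt trmx_delta -colE.
  by rewrite [RHS]mxE.
by rewrite -(mulmxK hu x) h0 mul0mx.
Qed.

Lemma Lt_sum (c : 'I_d -> F') x :
  (\sum_i c i *: Lt i) x = x *m \sum_i c i *: U' i.
Proof.
rewrite sum_lfunE mulmx_sumr; apply: eq_bigr => i _.
by rewrite scale_lfunE lfunE /= scalemxAr.
Qed.

Lemma Wt_elem u : u \in Wt -> exists c : 'I_d -> F', forall x, u x = x *m \sum_i c i *: U' i.
Proof.
move=> hu; exists (fun i => coord Xt i u) => x.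
rewrite {1}(coord_span hu) -Lt_sum; congr (fun_of_lfun _ x).
by apply: eq_bigr => i _; rewrite nth_mktuple.
Qed.

Lemma BU' (c : 'I_d -> F') : B' *m (\sum_i c i *: U' i)^T = (\sum_i c i *: U' i) *m B'.
Proof.
rewrite linear_sum mulmx_sumr mulmx_suml; apply: eq_bigr => i _.
by rewrite linearZ /= -scalemxAr -scalemxAl /U' /B' map_trmx -!map_mxM hBU.
Qed.

Lemma Wt_ok u : u \in Wt -> in_S bt u /\ nilpotent_end u.
Proof.
move=> /Wt_elem [c hc]; split.
  move=> x y; rewrite !hc /bt.
  transitivity ((y *m B' *m (x *m \sum_i c i *: U' i)^T)^T 0 0); last by rewrite mxE.
  rewrite !trmx_mul !trmxK B'sym !mulmxA.
  by rewrite -[x *m B' *m _]mulmxA BU' !mulmxA.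
exists n => x.
suff -> : forall k, iter k u x = x *m (\sum_i c i *: U' i) ^+ k by rewrite hN mulmx0.
elim=> [|k IH] /=; first by rewrite expr0 mulmx1.
by rewrite IH hc exprSr mulmxA.
Qed.

Lemma Xt_free : free Xt.
Proof.
apply/freeP => k hk.
have h1 : \sum_i k i *: U' i = 0.
  apply/row_matrixP => i; rewrite row0 rowE -Lt_sum.
  rewrite (_ : \sum_i k i *: Lt i = 0) ?zero_lfunE //.
  by rewrite -[RHS]hk; apply: eq_bigr => j _; rewrite nth_mktuple.
have hA' : row_free (map_mx f (\matrix_(i < d) mxvec (U i))).
  by rewrite /row_free mxrank_map.
have h2 : (\row_i k i) *m map_mx f (\matrix_(i < d) mxvec (U i)) = 0 *m map_mx f (\matrix_(i < d) mxvec (U i)).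
  have h1' : mxvec (\sum_i k i *: U' i) = 0 by rewrite h1 linear0.
  rewrite mul0mx -h1' linear_sum mulmx_sum_row.
  apply: eq_bigr => i _; rewrite linearZ /= !mxE; congr (_ *: _).
  by rewrite -map_row rowK map_mxvec.
move=> i; have := row_free_inj hA' h2 => /rowP /(_ i).
by rewrite !mxE.
Qed.

Lemma Wt_dim : \dim Wt = d.
Proof. by have := Xt_free; rewrite /free size_tuple => /eqP. Qed.

End Target.


Lemma np_inf (F : fieldType) (ch : 2%N \in [pchar F]) :
  ~ (forall x : F, exists y, y ^+ 2 = x) -> forall s : seq F, exists x, x \notin s.
Proof.
move=> np s; apply: NNPP => hs; apply: np => x.
have all_in : forall z, z \in s.
  by move=> z; apply/negPn/negP => hz; apply: hs; exists z.
have inj : injective (fun y : F => y ^+ 2).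
  by move=> y z h; apply: (@PCl.fr_inj F ch 1%N).
set s' := undup s; set ms := map (fun y : F => y ^+ 2) s'.
have u1 : uniq ms by rewrite (map_inj_uniq inj) undup_uniq.
have u2 : {subset ms <= s'} by move=> z _; rewrite mem_undup all_in.
have u3 : (size s' <= size ms)%N by rewrite size_map.
have [_ eqi] := uniq_min_size u1 u2 u3.
have : x \in ms by rewrite eqi mem_undup all_in.
by case/mapP => y _ ->; exists y.
Qed.

Theorem lemma7p2 (F : fieldType) (V : vectType F) (b : V -> V -> F)
  (W : {vspace 'End(V)}) :
  (2%N \in [pchar F]) ->
  is_bilin_form b -> sym_bform b -> nondeg_bform b ->
  (forall u : 'End(V), u \in W -> in_S b u /\ nilpotent_end u) ->
  exists (F' : fieldType) (V' : vectType F') (b' : V' -> V' -> F')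
         (W' : {vspace 'End(V')}),
    [/\ perfect_char2 F',
        \dim (fullv : {vspace V'}) = \dim (fullv : {vspace V}),
        [/\ is_bilin_form b', sym_bform b' & nondeg_bform b'],
        (forall u : 'End(V'), u \in W' -> in_S b' u /\ nilpotent_end u) &
        \dim W' = \dim W].
Proof.
move=> ch hbil hsym hnd hW.
case: (classic (forall x : F, exists y, y ^+ 2 = x)) => [perf | np].
  by exists F, V, b, W; split.
have inf := np_inf ch np.
pose F' := PCl.pc ch.
have hN : forall c : 'I_(\dim W) -> F',
    (\sum_i c i *: map_mx (@PCl.iota F ch) (@Ub _ _ W i)) ^+ dim V = 0.
  apply: ext_nil => // c.
  rewrite /Ub -(f2mx_sum (V:=V)); apply: nil_mx.
  exact: (hW _ (sum_in_W c)).2.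
exists F', 'rV[F']_(dim V), (bt (@PCl.iota F ch) (Bmat b)), (Wt (@PCl.iota F ch) (@Ub _ _ W)).
split.
- split; [exact: PCl.pc_char | exact: PCl.pc_perfect].
- by rewrite !dimvf; exact: mul1n.
- split; [exact: bt_bil | exact: (bt_sym _ (B_sym hsym)) | exact: (bt_nd (B_free hbil hnd))].
- move=> u hu; apply: (Wt_ok (B_sym hsym) _ hN) => //.
  move=> i; have hi : (vbasis W)`_i \in W by apply: vbasis_mem; apply: mem_nth; rewrite size_tuple.
  exact: (B_inS hbil hsym (hW _ hi).1).
- exact: (Wt_dim _ (A_free W)).
Qed.
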